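(* For every positive integer $N$ and every pair of indices $\boldsymbol{k}=(k_1,\dots,k_r)$, $\boldsymbol{l}=(l_1,\dots,l_r)$ of the same depth $r\ge1$, \[ \sum_{\substack{0<m_{j,1}\le\cdots\le m_{j,l_j}<N\ (j\in[r])\\ m_{j,l_j}<m_{j+1,1}\ (j\in[r-1])}}\ \prod_{j\in[r]}\frac1{(N-m_{j,1})\cdots(N-m_{j,l_j-1})\,m_{j,l_j}^{k_j}} =\sum_{\substack{0<n_{i,1}\le\cdots\le n_{i,k_i}<N\ (i\in[r])\\ n_{i,k_i}<n_{i+1,1}\ (i\in[r-1])}}\ \prod_{i\in[r]}\frac1{(N-n_{i,1})^{l_i}\,n_{i,2}\cdots n_{i,k_i}}. \]
   Context: $[n]=\{1,\dots,n\}$. An index is a tuple of positive integers. All variables $m_{j,\cdot},n_{i,\cdot}$ range over integers; empty products equal $1$ (e.g. when $l_j=1$ the product $(N-m_{j,1})\cdots(N-m_{j,l_j-1})$ is empty, and when $k_i=1$ the product $n_{i,2}\cdots n_{i,k_i}$ is empty). *)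

(* Defs.v *)
From mathcomp Require Import all_boot all_order all_algebra.
Set Implicit Arguments. Unset Strict Implicit. Unset Printing Implicit Defensive.
Import Order.TTheory GRing.Theory Num.Theory.

Definition block_chain (N : nat) (bs : seq (seq nat)) : bool :=
  all (fun b => sorted leq b && all (fun x => (0 < x < N)%N) b) bs &&
  sorted (fun b c => (last 0 b < head 0 c)%N) bs.

Local Open Scope ring_scope.

Definition lhs_w (N k : nat) (b : seq nat) : rat :=
  match b with
  | [::] => 1
  | x :: s => (\prod_(y <- belast x s) (N%:R - y%:R) * (last x s)%:R ^+ k)^-1
  end.

Definition rhs_w (N l : nat) (b : seq nat) : rat :=
  match b with
  | [::] => 1
  | x :: s => ((N%:R - x%:R) ^+ l * \prod_(y <- s) y%:R)^-1
  end.

Definition chain_sum (N : nat) (sh ex : seq nat)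
  (w : nat -> nat -> seq nat -> rat) : rat :=
  \sum_(m : (sumn sh).-tuple 'I_N | block_chain N (reshape sh (map val m)))
     \prod_(p <- zip ex (reshape sh (map val m))) w N p.1 p.2.

Definition mzv_lhs (N : nat) (k l : seq nat) : rat := chain_sum N l k lhs_w.
Definition mzv_rhs (N : nat) (k l : seq nat) : rat := chain_sum N k l rhs_w.

(* Main.v *)
Require Import Defs.
From mathcomp Require Import all_boot all_order all_algebra.
From mathcomp Require Import ring lra zify.
Set Implicit Arguments. Unset Strict Implicit. Unset Printing Implicit Defensive.
Import Order.TTheory GRing.Theory Num.Theory.
Local Open Scope ring_scope.

Section Conn.
Variable N : nat.
Definition aw (m : nat) : rat := (N%:R - m%:R)^-1.
Definition bw (m : nat) : rat := (m%:R)^-1.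
Definition ED (m n : nat) : rat := (m < n)%N%:R * ('C(n.-1, m)%:R / 'C(N.-1, m)%:R).

Lemma ED0 m n : (n <= m)%N -> ED m n = 0.
Proof. by rewrite /ED ltnNge => ->; rewrite mul0r. Qed.
Lemma EDE m n : (m < n)%N -> ED m n = 'C(n.-1, m)%:R / 'C(N.-1, m)%:R.
Proof. by rewrite /ED => ->; rewrite mul1r. Qed.

Lemma sumI p q (F : nat -> rat) : (q <= N.+1)%N ->
  \sum_(m < N.+1) ((p <= m) && (m < q))%N%:R * F m = \sum_(p <= m < q) F m.
Proof.
move=> hq.
rewrite -(big_mkord xpredT (fun m => ((p <= m) && (m < q))%N%:R * F m)).
rewrite (big_cat_nat _ (n:=q)) //= [X in _ + X]big1_seq ?addr0; last first.
  move=> i /andP[_]; rewrite mem_index_iota => /andP[/leq_gtF ->].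
  by rewrite andbF mul0r.
rewrite (big_cat_nat _ (n:=minn p q)) //= ?geq_minr //.
rewrite [X in X + _]big1_seq ?add0r; last first.
  move=> i /andP[_]; rewrite mem_index_iota => /andP[_ h].
  by rewrite leqNgt (leq_trans h (geq_minl _ _)) mul0r.
case: (leqP p q) => hpq.
  apply: eq_big_seq => i.
  by rewrite mem_index_iota => /andP[-> ->]; rewrite mul1r.
by rewrite big_geq // big_geq // ltnW.
Qed.

Lemma binN m : (0 < m)%N -> (m < N)%N ->
  m%:R * 'C(N.-1, m)%:R = (N%:R - m%:R) * 'C(N.-1, m.-1)%:R :> rat.
Proof.
move=> h0 h1; case: m h0 h1 => // m _ h1.
rewrite -natrB ?(ltnW h1) // -!natrM; congr (_%:R).
rewrite mul_bin_left; congr (_ * _); lia.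
Qed.

Lemma binpos m : (m < N)%N -> 'C(N.-1, m)%:R != 0 :> rat.
Proof. by move=> h; rewrite pnatr_eq0 -lt0n bin_gt0; lia. Qed.

Lemma A1term m n : (0 < m)%N -> (m <= n)%N -> (n < N)%N ->
  aw m * ED m.-1 n = aw n * ED m.-1 n - aw n * ED m n.
Proof.
move=> h0 h1 h2; rewrite (EDE (m:=m.-1)); last lia.
have hc : m%:R * 'C(n.-1, m)%:R = (n%:R - m%:R) * 'C(n.-1, m.-1)%:R :> rat.
  case: m h0 h1 {h2} => // m _ h1.
  rewrite -natrB // -!natrM; congr (_%:R).
  case: n h1 => // n h1; rewrite mul_bin_left; congr (_ * _); lia.
have hb := binN h0 (leq_ltn_trans h1 h2).
have hp1 := binpos (m:=m) (leq_ltn_trans h1 h2).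
have hp2 := binpos (m:=m.-1) (leq_ltn_trans (leq_pred _) (leq_ltn_trans h1 h2)).
have hm : m%:R != 0 :> rat by rewrite pnatr_eq0 -lt0n.
have hNm : N%:R - m%:R != 0 :> rat by rewrite subr_eq0 eqr_nat; lia.
have hNn : N%:R - n%:R != 0 :> rat by rewrite subr_eq0 eqr_nat; lia.
case: (ltnP m n) => hmn.
  rewrite (EDE hmn) /aw.
  apply: (canRL (addrK _)).
  have ec : 'C(n.-1, m)%:R = (n%:R - m%:R) * 'C(n.-1, m.-1)%:R / m%:R :> rat.
    by rewrite -hc mulrC mulrA mulVf // mul1r.
  have ed : 'C(N.-1, m)%:R = (N%:R - m%:R) * 'C(N.-1, m.-1)%:R / m%:R :> rat.
    by rewrite -hb mulrC mulrA mulVf // mul1r.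
  rewrite ec ed; field.
  by rewrite hNm hNn hp2 hm.
rewrite (ED0 hmn) mulr0 subr0.
have e : m = n by lia.
subst m.
by rewrite /aw.
Qed.

Lemma EDE' m n : (0 < n)%N -> ED m n = 'C(n.-1, m)%:R / 'C(N.-1, m)%:R.
Proof.
move=> hn; case: (ltnP m n) => h; first exact: EDE.
by rewrite ED0 // bin_small ?mul0r //; lia.
Qed.

Lemma A1 p n : (0 < p)%N -> (n < N)%N ->
  \sum_(m < N.+1) ((p <= m) && (m < N))%N%:R * (aw m * ED m.-1 n) = aw n * ED p.-1 n.
Proof.
move=> hp hn.
rewrite (eq_bigr (fun m : 'I_N.+1 => ((p <= m) && (m < n.+1))%N%:R * (aw m * ED m.-1 n))); last first.
  move=> i _; case: (ltnP n i) => h.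
    by rewrite (ED0 (m:=i.-1)) ?mulr0 //; lia.
  by rewrite (leq_ltn_trans h hn) ltnS h.
rewrite (@sumI p n.+1 (fun m => aw m * ED m.-1 n)); last lia.
case: (leqP p n.+1) => hpn; last first.
  by rewrite big_geq ?ED0 ?mulr0 //; lia.
rewrite (telescope_sumr_eq (fun k => - (aw n * ED k.-1 n))) //=.
  by rewrite ED0 // mulr0 oppr0 sub0r opprK.
move=> k /andP[h1 h2]; rewrite A1term //; try lia.
by rewrite opprK addrC.
Qed.

Lemma B1term m n : (0 < m)%N -> (m <= n)%N -> (m < N)%N ->
  aw m * ED m.-1 n = bw m * ED m n.+1 - bw m * ED m n.
Proof.
move=> h0 h1 h2.
rewrite (EDE' _ (ltn0Sn n)) (EDE' m (leq_trans h0 h1)) (EDE' m.-1 (leq_trans h0 h1)) /=.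
have hb := binN h0 h2.
have hp1 := binpos h2.
have hp2 := binpos (m:=m.-1) (leq_ltn_trans (leq_pred _) h2).
have hm : m%:R != 0 :> rat by rewrite pnatr_eq0 -lt0n.
have hNm : N%:R - m%:R != 0 :> rat by rewrite subr_eq0 eqr_nat; lia.
have ep : 'C(n, m)%:R = 'C(n.-1, m)%:R + 'C(n.-1, m.-1)%:R :> rat.
  case: m h0 h1 {h2 hb hp1 hp2 hm hNm} => // m _; case: n => // n _.
  by rewrite binS natrD.
have ed : 'C(N.-1, m)%:R = (N%:R - m%:R) * 'C(N.-1, m.-1)%:R / m%:R :> rat.
  by rewrite -hb mulrC mulrA mulVf // mul1r.
rewrite ep ed /aw /bw; field.
by rewrite hNm hp2 hm.
Qed.

Lemma B1 m n' : (0 < m)%N -> (m < N)%N -> (n' <= N)%N ->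
  \sum_(n < N.+1) (n <= n')%N%:R * (aw m * ED m.-1 n) = bw m * ED m n'.+1.
Proof.
move=> h0 hm hn.
rewrite (eq_bigr (fun n : 'I_N.+1 => ((m <= n) && (n < n'.+1))%N%:R * (aw m * ED m.-1 n))); last first.
  move=> i _; case: (ltnP i m) => h.
    by rewrite (ED0 (m:=m.-1)) ?mulr0 //; lia.
  by rewrite ltnS.
rewrite (@sumI m n'.+1 (fun n => aw m * ED m.-1 n)); last lia.
case: (leqP m n'.+1) => hpn; last first.
  by rewrite big_geq ?ED0 ?mulr0 //; lia.
rewrite (telescope_sumr_eq (fun k => bw m * ED m k)) //=.
  by rewrite (@ED0 m m) // mulr0 subr0.
by move=> k /andP[h1 h2]; rewrite B1term.
Qed.

Lemma tR : (true%:R : rat) = 1. Proof. by []. Qed.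
Lemma fR : (false%:R : rat) = 0. Proof. by []. Qed.

Lemma andR (x y : bool) : ((x && y)%:R : rat) = x%:R * y%:R.
Proof. by case: x; case: y; rewrite /= ?mul1r ?mul0r. Qed.

Definition EB m n := aw m * ED m.-1 n.

Fixpoint Q (i p m : nat) : rat :=
  if i is i'.+1 then
    \sum_(m' < N.+1) ((p <= m') && (m' < N))%N%:R * (aw m' * Q i' m' m)
  else ((p <= m) && (m < N))%N%:R.

Fixpoint Y (j n n1 : nat) : rat :=
  if j is j'.+1 then
    \sum_(n' < N.+1) ((n <= n') && (n' < N))%N%:R * (bw n' * Y j' n' n1)
  else (n < n1)%N%:R.

Lemma Q0 i p m : ~~ ((p <= m) && (m < N))%N -> Q i p m = 0.
Proof.
elim: i p => [|i IH] p h /=; first by rewrite (negPf h).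
apply: big1 => m' _.
case: (boolP ((m' <= m) && (m < N))%N) => h'; last by rewrite IH // !mulr0.
case: (boolP ((p <= m') && (m' < N))%N) => h''; last by rewrite mul0r.
exfalso; move/negP: h; apply; lia.
Qed.

Lemma YN j n1 : (n1 <= N)%N -> Y j N n1 = 0.
Proof.
case: j => [|j] h /=; first by rewrite ltnNge h.
by apply: big1 => i _; rewrite (_ : ((N <= i) && (i < N))%N = false) ?mul0r //; apply/negP => /andP[? ?]; lia.
Qed.

Lemma XI i p n : (0 < p)%N -> (n < N)%N ->
  \sum_(m < N.+1) Q i p m * EB m n = aw n ^+ i.+1 * ED p.-1 n.
Proof.
elim: i p => [|i IH] p hp hn; first by rewrite expr1 -A1.
rewrite /=.
rewrite (eq_bigr (fun m : 'I_N.+1 => \sum_(m' < N.+1) ((p <= m') && (m' < N))%N%:R * (aw m' * Q i m' m) * EB m n)); last by move=> m _; rewrite mulr_suml.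
rewrite exchange_big /=.
rewrite (eq_bigr (fun m' : 'I_N.+1 => aw n ^+ i.+1 * (((p <= m') && (m' < N))%N%:R * (aw m' * ED m'.-1 n)))); last first.
  move=> m' _.
  case: (boolP ((p <= m') && (m' < N))%N) => h; last by rewrite big1 ?mul0r ?mulr0 // => m _; rewrite mul0r mul0r.
  case/andP: (h) => hh1 hh2.
  rewrite tR !mul1r mulrCA -IH; [|lia|done].
  by rewrite mulr_sumr; apply: eq_bigr => m _; rewrite mul1r !mulrA.
by rewrite -mulr_sumr A1 // mulrA -exprSr.
Qed.

Lemma EBalt m n : (0 < m)%N -> (m < N)%N -> EB m n = bw n * ED m n.+1.
Proof.
move=> h0 h1; rewrite /EB.
case: (ltnP n m) => h.
  by rewrite !ED0 ?mulr0 //; lia.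
rewrite (EDE' _ (ltn0Sn n)) (EDE' m.-1 (leq_trans h0 h)) /=.
have hb := binN h0 h1.
have hp1 := binpos h1.
have hp2 := binpos (m:=m.-1) (leq_ltn_trans (leq_pred _) h1).
have hm : m%:R != 0 :> rat by rewrite pnatr_eq0 -lt0n.
have hn : n%:R != 0 :> rat by rewrite pnatr_eq0 -lt0n; lia.
have hNm : N%:R - m%:R != 0 :> rat by rewrite subr_eq0 eqr_nat; lia.
have ep : n%:R * 'C(n.-1, m.-1)%:R = m%:R * 'C(n, m)%:R :> rat.
  case: m h0 h {h1 hb hp1 hp2 hm hNm} => // m _ h.
  by rewrite -!natrM mul_bin_diag.
have ec : 'C(n, m)%:R = n%:R * 'C(n.-1, m.-1)%:R / m%:R :> rat.
  by rewrite ep mulrC mulrA mulVf // mul1r.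
have ed : 'C(N.-1, m)%:R = (N%:R - m%:R) * 'C(N.-1, m.-1)%:R / m%:R :> rat.
  by rewrite -hb mulrC mulrA mulVf // mul1r.
rewrite ec ed /aw /bw; field.
by rewrite hNm hp2 hm hn.
Qed.

Lemma YI j m n1 : (0 < m)%N -> (m < N)%N -> (n1 <= N)%N ->
  bw m ^+ j.+1 * ED m n1 = \sum_(n < N.+1) EB m n * Y j n n1.
Proof.
move=> h0 h1 hn1; elim: j => [|j IH].
  rewrite /= expr1.
  case: n1 hn1 => [|n1] hn1.
    by rewrite ED0 // mulr0 big1 // => i _; rewrite mulr0.
  rewrite -B1 //; last lia.
  by apply: eq_bigr => i _; rewrite mulrC ltnS.
rewrite exprS -mulrA IH mulr_sumr /=.
symmetry.
rewrite (eq_bigr (fun n : 'I_N.+1 => \sum_(n' < N.+1) (n <= n')%N%:R * EB m n * ((n' < N)%N%:R * (bw n' * Y j n' n1)))); last first.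
  move=> n _; rewrite mulr_sumr; apply: eq_bigr => n' _.
  by rewrite andR; ring.
rewrite exchange_big /=; apply: eq_bigr => n' _.
rewrite -mulr_suml.
rewrite (eq_bigr (fun n : 'I_N.+1 => (n <= n')%N%:R * (aw m * ED m.-1 n))) // B1 //; last by rewrite -ltnS; exact: ltn_ord.
case: (ltnP n' N) => h.
  by rewrite tR mul1r EBalt //; ring.
have -> : (n' : nat) = N by have := ltn_ord n'; lia.
by rewrite YN // !mulr0.
Qed.

Definition KL (l k m0 m : nat) : rat := Q l.-1 m0.+1 m * bw m ^+ k.
Definition KR (l k n n1 : nat) : rat := (n < N)%N%:R * aw n ^+ l * Y k.-1 n n1.

Lemma BL l k m0 n1 : (0 < l)%N -> (0 < k)%N -> (n1 <= N)%N ->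
  \sum_(m < N.+1) KL l k m0 m * ED m n1 = \sum_(n < N.+1) ED m0 n * KR l k n n1.
Proof.
case: l => // i; case: k => // j _ _ hn1; rewrite /KL /KR /=.
rewrite (eq_bigr (fun m : 'I_N.+1 => \sum_(n < N.+1) Q i m0.+1 m * EB m n * Y j n n1)); last first.
  move=> m _.
  case: (boolP ((m0 < m) && (m < N))%N) => h.
    by rewrite -mulrA YI ?mulr_sumr; [apply: eq_bigr => n _; rewrite mulrA| lia| lia| done].
  by rewrite Q0 // !mul0r big1 // => n _; rewrite !mul0r.
rewrite exchange_big /=; apply: eq_bigr => n _.
rewrite -mulr_suml.
case: (ltnP n N) => h.
  by rewrite XI // tR mul1r /=; ring.
have -> : (n : nat) = N by have := ltn_ord n; lia.
by rewrite YN // !mulr0.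
Qed.

Lemma addnF m : (m + false = m)%N. Proof. exact: addn0. Qed.
Lemma addnT m : (m + true = m.+1)%N. Proof. exact: addn1. Qed.

Definition desc := ((nat -> rat) * bool)%type.

Fixpoint desc_block (ws : seq (nat -> rat)) : seq desc :=
  if ws is w :: ws' then (w, nilp ws') :: desc_block ws' else [::].

Fixpoint Hs (D : seq desc) (p : nat) : rat :=
  if D is d :: D' then
    \sum_(m < N.+1) ((p <= m) && (m < N))%N%:R * (d.1 m * Hs D' (m + d.2))
  else 1.

Definition Ex (D : seq desc) (n : nat) : rat :=
  if D is d :: D' then (n < N)%N%:R * (d.1 n * Hs D' (n + d.2))
  else (n == N)%:R.

Lemma HsEx D p : (p <= N)%N -> Hs D p = \sum_(n < N.+1) (p <= n)%N%:R * Ex D n.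
Proof.
move=> hp; case: D => [|d D] /=.
  rewrite big_ord_recr /= big1 ?add0r; last first.
    by move=> i _; rewrite (_ : (widen_ord _ i == N :> nat) = false) ?mulr0 //; apply/negbTE/eqP => /= e; have := ltn_ord i; lia.
  by rewrite hp eqxx.
by apply: eq_bigr => n _; rewrite andR; ring.
Qed.

Lemma size_desc_block ws : size (desc_block ws) = size ws.
Proof. by elim: ws => //= w ws ->. Qed.

Lemma HsL i k D p :
  Hs (desc_block (nseq i aw ++ [:: fun m => bw m ^+ k]) ++ D) p =
  \sum_(m < N.+1) Q i p m * (bw m ^+ k * Hs D m.+1).
Proof.
elim: i p => [|i IH] p /=.
  by apply: eq_bigr => m _; rewrite addn1.
rewrite (_ : nilp _ = false); last by rewrite /nilp size_cat size_nseq addn1.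
rewrite (eq_bigr (fun m' : 'I_N.+1 => \sum_(m < N.+1) ((p <= m') && (m' < N))%N%:R * aw m' * Q i m' m * (bw m ^+ k * Hs D m.+1))); last first.
  by move=> m' _; rewrite addnF IH mulr_sumr mulr_sumr; apply: eq_bigr => m _; rewrite !mulrA.
rewrite exchange_big /=; apply: eq_bigr => m _; rewrite -mulr_suml; congr (_ * _).
by apply: eq_bigr => m' _; rewrite mulrA.
Qed.

Lemma YL j D n : (n < N)%N ->
  Hs (desc_block (nseq j bw) ++ D) (n + (j == 0%N)) = \sum_(n1 < N.+1) Y j n n1 * Ex D n1.
Proof.
elim: j n => [|j IH] n hn.
  by rewrite /= addn1 HsEx //; apply: eq_bigr => n1 _; rewrite ltnS.
rewrite (_ : (n + (j.+1 == 0%N))%N = n); last by rewrite addn0.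
rewrite /= (_ : nilp _ = (j == 0%N)); last by rewrite /nilp size_nseq.
rewrite (eq_bigr (fun n' : 'I_N.+1 => \sum_(n1 < N.+1) ((n <= n') && (n' < N))%N%:R * bw n' * Y j n' n1 * Ex D n1)); last first.
  move=> n' _; case: (boolP ((n <= n') && (n' < N))%N) => h.
    rewrite tR mul1r IH; last by case/andP: h.
    by rewrite !mulr_sumr; apply: eq_bigr => n1 _; rewrite mul1r !mulrA.
  by rewrite fR mul0r big1 // => n1 _; rewrite !mul0r.
rewrite exchange_big /=; apply: eq_bigr => n1 _; rewrite -mulr_suml; congr (_ * _).
by apply: eq_bigr => n' _; rewrite mulrA.
Qed.

Lemma ExR l j D n : (n <= N)%N ->
  Ex (desc_block ((fun m => aw m ^+ l) :: nseq j bw) ++ D) n =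
  \sum_(n1 < N.+1) KR l j.+1 n n1 * Ex D n1.
Proof.
move=> hn; rewrite /KR /=.
case: (ltnP n N) => h.
  rewrite (_ : nilp _ = (j == 0%N)); last by rewrite /nilp size_nseq.
  rewrite YL // tR mul1r mulr_sumr; apply: eq_bigr => n1 _; ring.
by rewrite fR !mul0r big1 // => n1 _; rewrite !mul0r.
Qed.

Definition Mx (f : nat -> nat -> rat) : 'M[rat]_N.+1 := \matrix_(i, j) f i j.
Definition KLm l k := Mx (KL l k).
Definition KRm l k := Mx (KR l k).
Definition EDm := Mx ED.

Lemma BLm l k : (0 < l)%N -> (0 < k)%N -> KLm l k *m EDm = EDm *m KRm l k.
Proof.
move=> hl hk; apply/matrixP => i j; rewrite !mxE.
rewrite (eq_bigr (fun m : 'I_N.+1 => KL l k i m * ED m j)); last by move=> m _; rewrite !mxE.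
rewrite [RHS](eq_bigr (fun n : 'I_N.+1 => ED i n * KR l k n j)); last by move=> m _; rewrite !mxE.
by apply: BL => //; rewrite -ltnS.
Qed.

Definition prodL (ps : seq (nat * nat)) := foldr (fun p M => KLm p.1 p.2 *m M) 1%:M ps.
Definition prodR (ps : seq (nat * nat)) := foldr (fun p M => KRm p.1 p.2 *m M) 1%:M ps.

Lemma prodLR ps : all (fun p => (0 < p.1) && (0 < p.2))%N ps ->
  prodL ps *m EDm = EDm *m prodR ps.
Proof.
elim: ps => [|p ps IH] /=; first by rewrite mul1mx mulmx1.
case/andP => /andP[h1 h2] h.
by rewrite -mulmxA IH // mulmxA BLm // mulmxA.
Qed.

Definition descL (p : nat * nat) := desc_block (nseq p.1.-1 aw ++ [:: fun m => bw m ^+ p.2]).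
Definition descR (p : nat * nat) := desc_block ((fun m => aw m ^+ p.1) :: nseq p.2.-1 bw).

Lemma HsLchain ps m0 : all (fun p => (0 < p.1) && (0 < p.2))%N ps -> (m0 < N)%N ->
  Hs (flatten [seq descL p | p <- ps]) m0.+1 = (prodL ps *m EDm) (inord m0) ord_max.
Proof.
elim: ps m0 => [|p ps IH] m0 /=.
  move=> _ h; rewrite mul1mx /EDm /Mx mxE inordK; last lia.
  by rewrite /= EDE // divff // binpos.
case/andP => /andP[h1 h2] h hm0.
rewrite /descL HsL -mulmxA mxE; apply: eq_bigr => m _.
rewrite /KLm /Mx mxE inordK; last lia.
rewrite /KL mulrA; case: (ltnP m N) => hm.
  by rewrite IH // inord_val.
by rewrite Q0 ?mul0r //; apply/negP => /andP[_ ?]; lia.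
Qed.

Lemma ExRchain ps n : all (fun p => (0 < p.1) && (0 < p.2))%N ps -> (n <= N)%N ->
  Ex (flatten [seq descR p | p <- ps]) n = prodR ps (inord n) ord_max.
Proof.
elim: ps n => [|[l k] ps IH] n.
  move=> _ h; rewrite /= mxE (_ : (inord n == ord_max :> 'I_N.+1) = (n == N)) //.
  by rewrite -val_eqE /= inordK // ltnS.
case: k => [|k]; first by rewrite /= andbF.
case/andP => /andP[h1 h2] h hn.
transitivity (Ex (descR (l, k.+1) ++ flatten [seq descR p | p <- ps]) n); first by [].
rewrite /descR ExR // /= mxE; apply: eq_bigr => n1 _.
rewrite /KRm /Mx mxE inordK ?IH ?inord_val //; first by rewrite -ltnS.
Qed.

Fixpoint chainD (D : seq desc) (p : nat) (s : seq nat) : bool :=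
  match D, s with
  | [::], [::] => true
  | d :: D', x :: s' => (p <= x)%N && chainD D' (x + d.2) s'
  | _, _ => false
  end.

Definition wtD (D : seq desc) (s : seq nat) : rat := \prod_(q <- zip D s) q.1.1 q.2.

Lemma tsum_cons n (F : seq nat -> rat) :
  \sum_(t : n.+1.-tuple 'I_N) F (map val t) =
  \sum_(x : 'I_N) \sum_(t : n.-tuple 'I_N) F (val x :: map val t).
Proof.
rewrite pair_big /=.
rewrite (reindex (fun p : 'I_N * n.-tuple 'I_N => [tuple of p.1 :: p.2])) /=.
  by apply: eq_bigr => -[x t] _.
exists (fun t : n.+1.-tuple 'I_N => (thead t, [tuple of behead t])).
  by move=> [x t] _ /=; rewrite theadE; congr pair; apply: val_inj.
by move=> t _ /=; rewrite [RHS]tuple_eta; apply: val_inj.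
Qed.

Lemma tsumD D p :
  \sum_(t : (size D).-tuple 'I_N) (chainD D p (map val t))%:R * wtD D (map val t) = Hs D p.
Proof.
elim: D p => [|d D IH] p.
  rewrite /= (big_pred1 [tuple]) //; last by move=> t; apply/esym/eqP/tuple0.
  by rewrite /wtD big_nil mulr1.
rewrite (@tsum_cons (size D) (fun s => (chainD (d::D) p s)%:R * wtD (d::D) s)).
rewrite /= big_ord_recr /= ltnn andbF mul0r addr0.
apply: eq_bigr => x _ /=.
rewrite ltn_ord andbT -IH !mulr_sumr; apply: eq_bigr => t _.
rewrite /wtD /= big_cons andR; ring.
Qed.

Lemma chainD_block ws D p b s : size ws = size b -> (0 < size b)%N ->
  chainD (desc_block ws ++ D) p (b ++ s) =
  [&& p <= head 0 b, sorted leq b & chainD D (last 0 b).+1 s]%N.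
Proof.
elim: ws p b => [|w ws IH] p [|x b] //= hs _.
case: ws IH hs => [|w' ws] IH hs.
  by case: b hs => // _; rewrite /= addnT.
case: b hs => // y b hs.
rewrite addnF IH //=; last by move: hs => /= [->].
by rewrite !andbA.
Qed.

Lemma wtD_cat D1 D2 s1 s2 : size D1 = size s1 ->
  wtD (D1 ++ D2) (s1 ++ s2) = wtD D1 s1 * wtD D2 s2.
Proof. by move=> h; rewrite /wtD zip_cat // big_cat. Qed.

Lemma wtD_block ws b : wtD (desc_block ws) b = \prod_(q <- zip ws b) q.1 q.2.
Proof.
elim: ws b => [|w ws IH] [|x b]; rewrite /wtD /= ?big_nil ?big_cons //.
by move: (IH b); rewrite /wtD => ->.
Qed.

Definition Dof (mk : nat -> nat -> seq (nat -> rat)) (sh ex : seq nat) : seq desc :=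
  flatten [seq desc_block (mk q.1 q.2) | q <- zip sh ex].

Lemma sorted_pos x b : (0 < x)%N -> all (fun y => y < N)%N (x :: b) -> sorted leq (x :: b) ->
  all (fun y => 0 < y < N)%N (x :: b).
Proof.
move=> hx hN hs.
have hall : all (leq x) b.
  by move: hs; rewrite [sorted _ _]/= path_sortedE; [case/andP | exact: leq_trans].
apply/allP => y hy.
move/allP: hN => /(_ y hy) ->; rewrite andbT.
move: hy; rewrite inE => /orP[/eqP -> //|hy].
by move/allP: hall => /(_ y hy) hxy; rewrite (leq_trans hx hxy).
Qed.

Lemma chainP mk (hmk : forall n e, (0 < n)%N -> size (mk n e) = n) bs ex p :
  size ex = size bs -> all (fun b => 0 < size b)%N bs ->
  all (fun x => x < N)%N (flatten bs) -> (0 < p)%N ->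
  (block_chain N bs && (if bs is b :: _ then p <= head 0 b else true)%N) =
  chainD (Dof mk (shape bs) ex) p (flatten bs).
Proof.
elim: bs ex p => [|b bs IH] [|e ex] p //=.
move=> [hex] /andP[hb hbs]; rewrite all_cat => /andP[hbN hbsN] hp.
rewrite /Dof /= chainD_block ?hmk //.
rewrite -/(Dof mk (shape bs) ex) -IH //.
case: b hb hbN => // x b _ hbN /=.
rewrite /block_chain /=.
case hpx: (p <= x)%N; last by rewrite !andbF.
case hs: (path leq x b); last by rewrite !andbF.
have hA : ((0 < x < N) && all (fun y => 0 < y < N) b)%N.
  by have := sorted_pos (leq_trans hp hpx) hbN; rewrite /= hs; apply.
rewrite hA /=.
case: bs {IH hex hbs hbsN} => [|c bs] /=; first by [].
rewrite andbT. set A := (sorted leq c && _ && _). set B := (last x b < head 0 c)%N. set C := path _ c bs. by case: A; case: B; case: C.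
Qed.

Lemma prod_nseq (f : nat -> rat) (u : seq nat) :
  \prod_(q <- zip (nseq (size u) f) u) q.1 q.2 = \prod_(y <- u) f y.
Proof. by elim: u => [|y u IH]; rewrite ?big_nil //= !big_cons IH. Qed.

Lemma wtP mk (hmk : forall n e, (0 < n)%N -> size (mk n e) = n) (W : nat -> seq nat -> rat)
  (hW : forall e b, (0 < size b)%N -> W e b = \prod_(q <- zip (mk (size b) e) b) q.1 q.2)
  bs ex : size ex = size bs -> all (fun b => 0 < size b)%N bs ->
  \prod_(q <- zip ex bs) W q.1 q.2 = wtD (Dof mk (shape bs) ex) (flatten bs).
Proof.
elim: bs ex => [|b bs IH] [|e ex] //=.
  by rewrite big_nil /Dof /wtD /= big_nil.
move=> [hex] /andP[hb hbs].
rewrite big_cons /Dof /= wtD_cat ?size_desc_block ?hmk //.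
by rewrite wtD_block -hW // IH.
Qed.

Lemma tsumD' D p n : size D = n ->
  \sum_(t : n.-tuple 'I_N) (chainD D p (map val t))%:R * wtD D (map val t) = Hs D p.
Proof. by move=> e; case: n / e; exact: tsumD. Qed.

Lemma conv mk (hmk : forall n e, (0 < n)%N -> size (mk n e) = n) (w : nat -> nat -> seq nat -> rat)
  (hW : forall e b, (0 < size b)%N -> w N e b = \prod_(q <- zip (mk (size b) e) b) q.1 q.2)
  sh ex : size sh = size ex -> all (fun x => 0 < x)%N sh ->
  chain_sum N sh ex w = Hs (Dof mk sh ex) 1.
Proof.
move=> hse hsh.
have hsz : size (Dof mk sh ex) = sumn sh.
  rewrite /Dof size_flatten /shape -map_comp.
  elim: sh ex hse hsh => [|x sh IH] [|e ex] //= [hse] /andP[hx hsh].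
  by rewrite size_desc_block hmk // IH.
rewrite -(tsumD' 1 hsz) /chain_sum big_mkcond /=; apply: eq_bigr => t _.
set s := map val t.
have hs : size s = sumn sh by rewrite size_map size_tuple.
have hsN : all (fun x => x < N)%N s.
  by apply/allP => y /mapP[z _ ->]; exact: ltn_ord.
set bs := reshape sh s.
have e1 : shape bs = sh by rewrite reshapeKl // hs.
have e2 : flatten bs = s by rewrite reshapeKr // hs.
have hne : all (fun b => 0 < size b)%N bs by rewrite -all_map -/(shape bs) e1.
have hexs : size ex = size bs by rewrite size_reshape hse.
have hbc : block_chain N bs = chainD (Dof mk sh ex) 1 s.
  rewrite -e1 -e2 -chainP //; last by rewrite e2.
  rewrite andb_idr //; case: bs hne {e1 e2 hexs} => [|[|x b] bs] //= _.
  rewrite /block_chain /= => /andP[/andP[/andP[_ /andP[/andP[]]]]] //.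
rewrite -hbc (wtP hmk hW hexs hne) e1 e2.
by case: (block_chain N bs); rewrite ?mul1r ?mul0r.
Qed.

Definition mkL (n e : nat) : seq (nat -> rat) := nseq n.-1 aw ++ [:: fun m => bw m ^+ e].
Definition mkR (n e : nat) : seq (nat -> rat) := (fun m => aw m ^+ e) :: nseq n.-1 bw.

Lemma size_mkL n e : (0 < n)%N -> size (mkL n e) = n.
Proof. by case: n => // n _; rewrite /mkL size_cat size_nseq addn1. Qed.

Lemma hWL e b : (0 < size b)%N ->
  lhs_w N e b = \prod_(q <- zip (mkL (size b) e) b) q.1 q.2.
Proof.
case: b => // x s _; rewrite /lhs_w /mkL [size _]/= [_.+1.-1]/=.
have -> : zip (nseq (size s) aw ++ [:: fun m => bw m ^+ e]) (x :: s) =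
    zip (nseq (size (belast x s)) aw) (belast x s) ++ [:: (fun m => bw m ^+ e, last x s)].
  by rewrite (lastI x s) -cats1 zip_cat ?size_nseq ?size_belast.
rewrite big_cat /= big_cons big_nil mulr1 prod_nseq.
by rewrite /= invfM -prodfV /aw /bw exprVn.
Qed.

Lemma hWR e b : (0 < size b)%N ->
  rhs_w N e b = \prod_(q <- zip (mkR (size b) e) b) q.1 q.2.
Proof.
case: b => // x s _; rewrite /rhs_w /mkR /= big_cons prod_nseq.
by rewrite /= invfM -prodfV /aw /bw exprVn.
Qed.

Lemma size_mkR n e : (0 < n)%N -> size (mkR n e) = n.
Proof. by case: n => // n _; rewrite /mkR /= size_nseq. Qed.

Lemma zipC (k l : seq nat) : zip k l = [seq (q.2, q.1) | q <- zip l k].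
Proof. by elim: k l => [|x k IH] [|y l] //=; rewrite IH. Qed.

Lemma allpos (l k : seq nat) : all (fun x => 0 < x)%N l -> all (fun x => 0 < x)%N k ->
  all (fun p => (0 < p.1) && (0 < p.2))%N (zip l k).
Proof.
elim: l k => [|x l IH] [|y k] //= /andP[hx hl] /andP[hy hk].
by rewrite hx hy IH.
Qed.

Lemma mainN (k l : seq nat) : (0 < N)%N -> size k = size l ->
  all (fun x => 0 < x)%N k -> all (fun x => 0 < x)%N l ->
  mzv_lhs N k l = mzv_rhs N k l.
Proof.
move=> hN hs hk hl.
have hps := allpos hl hk.
rewrite /mzv_lhs /mzv_rhs.
rewrite (conv size_mkL hWL) -?hs // (conv size_mkR hWR) //.
have -> : Dof mkL l k = flatten [seq descL q | q <- zip l k] by [].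
have -> : Dof mkR k l = flatten [seq descR q | q <- zip l k].
  by rewrite /Dof zipC -map_comp.
rewrite HsLchain // prodLR // HsEx // mxE; apply: eq_bigr => n _.
rewrite ExRchain // ?inord_val; last by rewrite -ltnS.
rewrite /EDm /Mx mxE inordK // /ED /= bin0.
by rewrite bin0 divr1.
Qed.
End Conn.

Local Close Scope ring_scope.

Theorem mainTheorem12 (N : nat) (k l : seq nat) :
  (0 < N)%N -> (0 < size k)%N -> size k = size l ->
  all (fun x => 0 < x)%N k -> all (fun x => 0 < x)%N l ->
  mzv_lhs N k l = mzv_rhs N k l.
Proof. by move=> hN _ hs hk hl; apply: mainN. Qed.
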